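(* Let $G$ be a finite group, let $\gamma$ be a faithful $n$-dimensional complex representation of $G$ with character $\chi_\gamma$, and let $e=c_0,c_1,\dots,c_\ell$ be a set of representatives of the conjugacy classes of $G$. Then \[ \frac{1}{|G|}\prod_{i=1}^{\ell}\bigl(n-\chi_\gamma(c_i)\bigr)=|K(\gamma)|. \] In particular the left-hand side is a positive integer.
   Context: Let $G$ be a finite group with irreducible complex characters $\chi_0,\chi_1,\dots,\chi_\ell$, where $\chi_0$ is the trivial character (so $\ell+1$ is the number of conjugacy classes of $G$). For a faithful $n$-dimensional complex representation $\gamma$ of $G$ with character $\chi_\gamma$, let $M=(m_{ij})\in\mathbb{Z}^{(\ell+1)\times(\ell+1)}$ be defined by $\chi_\gamma\cdot\chi_i=\sum_{j=0}^{\ell}m_{ij}\chi_j$. The extended McKay–Cartan matrix is $\tilde C:=nI-M$, and the McKay–Cartan matrix $C$ is the $\ell\times\ell$ matrix obtained from $\tilde C$ by deleting the row and column indexed by $\chi_0$. The critical group of $\gamma$ is the finite abelian group $K(\gamma):=\operatorname{coker}(C^t:\mathbb{Z}^\ell\to\mathbb{Z}^\ell)$; equivalently $\operatorname{coker}(\tilde C^t:\mathbb{Z}^{\ell+1}\to\mathbb{Z}^{\ell+1})\cong\mathbb{Z}\oplus K(\gamma)$. *)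

(* Defs.v *)
From HB Require Import structures.
From mathcomp Require Import all_boot all_order all_algebra all_fingroup all_solvable all_field all_character.
Set Implicit Arguments. Unset Strict Implicit. Unset Printing Implicit Defensive.
Import Order.TTheory GRing.Theory Num.Theory.
Local Open Scope ring_scope.

Lemma succ_lt_pred (m : nat) (i : 'I_m.-1) : (i.+1 < m)%N.
Proof. by case: m i => [|m] [i /= hi]. Qed.

Definition ordS_pred (m : nat) (i : 'I_m.-1) : 'I_m := Ordinal (succ_lt_pred i).

Definition delete0 (R : Type) (m : nat) (A : 'M[R]_m) : 'M[R]_m.-1 :=
  \matrix_(i, j) A (ordS_pred i) (ordS_pred j).

Definition ext_mckay_cartan (m n : nat) (M : 'M[int]_m) : 'M[int]_m :=
  (n%:Z)%:M - M.
Definition mckay_cartan (m n : nat) (M : 'M[int]_m) : 'M[int]_m.-1 :=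
  delete0 (ext_mckay_cartan n M).

Definition in_image (m : nat) (A : 'M[int]_m) (v : 'cV[int]_m) : Prop :=
  exists x : 'cV[int]_m, v = A *m x.

(* The cokernel Z^m / A Z^m is finite of order k: there are k representatives
   meeting every coset exactly once. *)
Definition coker_order (m : nat) (A : 'M[int]_m) (k : nat) : Prop :=
  exists r : 'I_k -> 'cV[int]_m,
    (forall v : 'cV[int]_m, exists i : 'I_k, in_image A (v - r i)) /\
    (forall i j : 'I_k, in_image A (r i - r j) -> i = j).

(* Main.v *)
From HB Require Import structures.
From mathcomp Require Import all_boot all_order all_algebra all_fingroup all_solvable all_field all_character.
Require Import Defs.
Set Implicit Arguments. Unset Strict Implicit. Unset Printing Implicit Defensive.
Import Order.TTheory GRing.Theory Num.Theory.
Local Open Scope ring_scope.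

Lemma card_dffun_ord (N : nat) (f : 'I_N -> finType) :
  #|{dffun forall x : 'I_N, f x}| = (\prod_(i < N) #|f i|)%N.
Proof.
by rewrite card_dep_ffun foldr_map -big_enum [in RHS]unlock /reducebig /= enumT.
Qed.

Lemma absz_unit (u : int) : u \is a GRing.unit -> `|u|%N = 1%N.
Proof.
move=> uU; have := abszM u u^-1; rewrite divrr //= => /esym/eqP.
by rewrite muln_eq1 => /andP[/eqP].
Qed.

Lemma small_dvd0 (a d : int) : (`|a| < `|d|)%N -> (exists z, a = d * z) -> a = 0.
Proof.
move=> lt [z Ea]; rewrite Ea in lt *.
have [->|nz] := eqVneq z 0; first by rewrite mulr0.
move: lt; rewrite abszM -[X in (_ < X)%N]muln1 ltn_mul2l => /andP[_].
by rewrite ltnS leqn0 absz_eq0 (negbTE nz).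
Qed.

Lemma mod_lt (m d : int) : d != 0 -> (`|(m %% d)%Z| < `|d|)%N.
Proof.
move=> nz; have h1 := modz_ge0 m nz; have h2 := ltz_mod m nz.
by rewrite -ltz_nat gez0_abs // abszE.
Qed.

From mathcomp Require Import zify.
Lemma dist_lt (a b c : nat) : (a < c)%N -> (b < c)%N -> (`|a%:Z - b%:Z| < c)%N.
Proof. move=> ha hb. lia. Qed.

Lemma coker_det (N : nat) (A : 'M[int]_N) :
  \det A != 0 -> coker_order A `|\det A|%N.
Proof.
move=> nzA.
have [L uL [R uR [d _ defA]]] := int_Smith_normal_form A.
pose dd := \row_(i < N) d`_i.
have defD : \matrix_(i, j) (d`_i *+ (i == j :> nat)) = diag_mx dd.
  by apply/matrixP=> i j; rewrite !mxE.
rewrite defD in defA.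
have detA : \det A = \det L * \prod_(i < N) d`_i * \det R.
  by rewrite defA !det_mulmx det_diag; under eq_bigr do rewrite mxE.
have nzd (i : 'I_N) : d`_i != 0.
  apply/eqP => d0; move: nzA; rewrite detA (bigD1 i) //= d0 mul0r mulr0 mul0r.
  by rewrite eqxx.
have absA : `|\det A|%N = (\prod_(i < N) absz (nth 0%R d i))%N.
  have uLd : \det L \is a GRing.unit by rewrite -unitmxE.
  have uRd : \det R \is a GRing.unit by rewrite -unitmxE.
  rewrite detA !abszM (absz_unit uLd) (absz_unit uRd) mul1n muln1.
  by rewrite (big_morph absz abszM (erefl : absz 1 = 1%N)).
pose T := {dffun forall i : 'I_N, 'I_(absz (nth 0%R d i))}.
have cardT : #|T| = `|\det A|%N.
  by rewrite card_dffun_ord absA; apply: eq_bigr => i _; rewrite card_ord.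
pose col_of (t : T) : 'cV[int]_N := \col_i ((t i : nat)%:Z).
pose rv t := L *m col_of t.
have key w : in_image A w <-> exists y, invmx L *m w = diag_mx dd *m y.
  split=> [[x ->]|[y Ey]].
    by exists (R *m x); rewrite defA -!mulmxA mulKmx.
  exists (invmx R *m y); rewrite defA -!mulmxA mulKVmx // -Ey mulKVmx //.
exists (fun i => rv (enum_val (cast_ord (esym cardT) i))); split.
  move=> v; pose u := invmx L *m v.
  pose t : T := [ffun i => Ordinal (mod_lt (u i 0) (nzd i))].
  have [i Ei] : exists i : 'I_`|\det A|, enum_val (cast_ord (esym cardT) i) = t.
    exists (cast_ord cardT (enum_rank t)).
    by rewrite cast_ordK enum_rankK.
  exists i; apply: (proj2 (key _)); exists (\col_i divz (u i 0) d`_i).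
  rewrite Ei mulmxBr mulKmx // -/u; clearbody u.
  rewrite mul_diag_mx; apply/matrixP=> k j.
  rewrite !mxE ffunE /= ord1 gez0_abs ?modz_ge0 //.
  by rewrite {1}(divz_eq (u k 0) d`_k) addrK mulrC.
move=> i j /(proj1 (key _)) [y Ey].
apply: (cast_ord_inj (eq_n := esym cardT)); apply: enum_val_inj.
set s := enum_val _ in Ey *; set t := enum_val _ in Ey *.
apply/ffunP => k; apply/val_inj/eqP; rewrite -eqz_nat -subr_eq0; apply/eqP.
move/matrixP: Ey => /(_ k 0); rewrite mulmxBr !mulKmx // mul_diag_mx !mxE => Ek.
apply: (@small_dvd0 _ d`_k); last by exists (y k 0).
by apply: dist_lt; rewrite ?ltn_ord.
Qed.



Lemma det_delete0 (R : comNzRingType) (m : nat) (A : 'M[R]_m) (hm : (0 < m)%N) :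
  \det (delete0 A) = \det (A + delta_mx (Ordinal hm) (Ordinal hm)) - \det A.
Proof.
case: m A hm => // m A hm.
have -> : Ordinal hm = ord0 by apply: val_inj.
have Ed : delete0 A = row' 0 (col' 0 A).
  apply/matrixP=> k l; rewrite !mxE; congr (A _ _); exact: val_inj.
have Ecof j : cofactor (A + delta_mx 0 0) 0 j = cofactor A 0 j.
  rewrite /cofactor; congr (_ * \det _); apply/matrixP=> k l; rewrite !mxE.
  by rewrite eq_sym (negbTE (neq_lift 0 k)) /= addr0.
rewrite (expand_det_row (A + delta_mx 0 0) 0) (expand_det_row A 0).
under eq_bigr do rewrite Ecof mxE mulrDl.
rewrite big_split /= addrC addrK (bigD1 0) //= big1 ?addr0.
  by rewrite mxE !eqxx mul1r /cofactor expr0 mul1r Ed.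
by move=> j nj; rewrite mxE eqxx (negbTE nj) mul0r.
Qed.



Lemma char_det (gT : finGroupType) (G : {group gT}) (n : nat)
    (rG : mx_representation algC G n) (M : 'M[int]_(Nirr G))
    (HM : forall i : Iirr G,
        cfRepr rG * 'chi_i = \sum_(j < Nirr G) (M i j)%:~R *: 'chi_j) :
  let Ct := map_mx intr (ext_mckay_cartan n M) : 'M[algC]_(Nirr G) in
  \det (Ct + delta_mx 0 0) = #|G|%:R^-1 *
     \prod_(i : Iirr G | irr_class i != (1 ^: G)%g)
        (n%:R - cfRepr rG (repr (irr_class i)))
  /\ \det Ct = 0.
Proof.
move=> Ct.
set phi := cfRepr rG.
pose x (j : Iirr G) := repr (irr_class j).
have xG j : x j \in G by case/repr_classesP: (irr_classP j).
pose k0 := @class_Iirr _ G (1 ^: G)%g.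
have ck0 : irr_class k0 = (1 ^: G)%g.
  by apply: class_IirrK; apply: mem_classes.
have xk0 : x k0 = 1%g by rewrite /x ck0 class1G repr_group.
pose s : {perm Iirr G} := tperm 0 k0.
pose X2 := \matrix_(i, j) 'chi_i (x (s j)) : 'M[algC]_(Nirr G).
pose lam j := n%:R - phi (x (s j)).
pose L := diag_mx (\row_j lam j).
have eqCm : Ct = n%:R%:M - map_mx intr M.
  by apply/matrixP=> i j; rewrite !mxE rmorphB rmorphMn /=.
have HMx i y : phi y * 'chi_i y = \sum_k (M i k)%:~R * 'chi_k y.
  have := congr1 (fun f : 'CF(G) => f y) (HM i); rewrite cfunE sum_cfunE => ->.
  by apply: eq_bigr => k _; rewrite cfunE.
have Eq1 : Ct *m X2 = X2 *m L.
  rewrite eqCm mulmxBl mul_scalar_mx mul_mx_diag; apply/matrixP=> i j.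
  rewrite !mxE; under eq_bigr do rewrite !mxE.
  by rewrite -HMx /lam mulrBr mulrC [phi _ * _]mulrC.
have X2E : X2 = col_perm s (character_table G).
  by apply/matrixP=> i j; rewrite !mxE.
have uX2 : \det X2 != 0.
  rewrite -unitfE -unitmxE X2E col_permE unitmx_mul unitmx_perm andbT.
  exact: character_table_unit.
pose u := \col_j (#|irr_class (s j)|%:R / #|G|%:R) : 'cV[algC]_(Nirr G).
pose e0 := delta_mx 0 0 : 'cV[algC]_(Nirr G).
pose e0r := delta_mx 0 0 : 'rV[algC]_(Nirr G).
pose ones := const_mx 1 : 'rV[algC]_(Nirr G).
have Xu : X2 *m u = e0.
  apply/matrixP=> i j; rewrite ord1 !mxE andbT.
  transitivity (\sum_k 'chi_i (x k) * (#|irr_class k|%:R / #|G|%:R)).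
    by rewrite [RHS](reindex_inj (@perm_inj _ s)); apply: eq_bigr => k _; rewrite !mxE.
  rewrite -(first_orthogonality_relation i 0) sum_by_classes; last first.
    by move=> g h Gg Gh; rewrite -conjVg !cfunJ ?groupV.
  rewrite reindex_irr_class mulr_sumr; apply: eq_bigr => k _.
  rewrite irr0 cfun1E groupV xG mulr1 -/(x k).
  by rewrite mulrA mulrC; congr (_ * _); exact: mulrC.
have chi0x j : 'chi[G]_0 (x j) = 1 by rewrite irr0 cfun1E xG.
have dX : delta_mx 0 0 *m X2 = e0 *m ones.
  apply/matrixP=> i j; rewrite !mxE big_ord1 !mxE (bigD1 0) //= big1 => [|k nk].
    by rewrite !mxE addr0 chi0x mulr1.
  by rewrite mxE (negbTE nk) andbF mul0r.
have Eq3 : (Ct + delta_mx 0 0) *m X2 = X2 *m (L + u *m ones).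
  by rewrite mulmxDl Eq1 dX -Xu -mulmxA -mulmxDr.
have lam0 : lam 0 = 0.
  by rewrite /lam tpermL xk0 cfRepr1 subrr.
have detL : \det L = 0.
  by rewrite det_diag (bigD1 0) //= mxE lam0 mul0r.
have cancelX (A B : 'M[algC]_(Nirr G)) : A *m X2 = X2 *m B -> \det A = \det B.
  by move/(congr1 determinant); rewrite !det_mulmx mulrC => /(mulfI uX2).
split; last by rewrite (cancelX _ _ Eq1).
rewrite (cancelX _ _ Eq3).
pose B' := L + u *m e0r.
pose E := 1%:M + e0 *m (ones - e0r).
have Le0 : L *m e0 = 0.
  apply/matrixP=> i j; rewrite mul_diag_mx !mxE ord1.
  by have [->|ni] := eqVneq i 0; rewrite ?lam0 ?mul0r ?mulr0.
have e0e0 : e0r *m e0 = 1%:M.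
  by rewrite mul_delta_mx; apply/matrixP=> a b; rewrite !ord1 !mxE.
have EB : L + u *m ones = B' *m E.
  rewrite /E mulmxDr mulmx1 mulmxA /B' mulmxDl Le0 add0r -[u *m e0r *m e0]mulmxA e0e0 mulmx1.
  by rewrite mulmxBr addrACA subrr addr0.
have detE : \det E = 1.
  rewrite -det_tr det_trig; last first.
    apply/is_trig_mxP => i j lij; rewrite !mxE big_ord1 !mxE.
    have nj0 : j != 0 by rewrite -(inj_eq val_inj); apply: contraTneq lij => ->.
    have nji : (j == i) = false by apply/negbTE; rewrite neq_ltn lij orbT.
    by rewrite nji (negbTE nj0) /= mul0r addr0.
  apply: big1 => i _; rewrite !mxE big_ord1 !mxE eqxx.
  by case: (i == 0); rewrite /= ?subrr ?mulr0 ?mul0r addr0.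
rewrite EB det_mulmx detE mulr1 det_trig; last first.
  apply/is_trig_mxP => i j lij; rewrite !mxE big_ord1 !mxE.
  have nj0 : j != 0 by rewrite -(inj_eq val_inj); apply: contraTneq lij => ->.
  have nij : (i == j) = false by apply/negbTE; rewrite neq_ltn lij.
  by rewrite nij (negbTE nj0) /= mulr0n mulr0 addr0.
have s0 : s 0 = k0 by rewrite /s tpermL.
rewrite (bigD1 (0 : Iirr G)) //=.
have -> : B' 0 0 = #|G|%:R^-1.
  rewrite !mxE big_ord1 !mxE eqxx /= mulr1 mulr1n lam0 add0r s0 ck0 class1G.
  by rewrite cards1 mul1r.
congr (_ * _).
rewrite [RHS](reindex_inj (@perm_inj _ s)) /=.
apply: eq_big => [i|i ni].
  by rewrite -ck0 (inj_eq (can_inj irr_classK)) -s0 (inj_eq perm_inj).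
by rewrite !mxE big_ord1 !mxE eqxx (negbTE ni) andbF mulr0 addr0 mulr1n.
Qed.



Lemma prod_conj_pos (T : finType) (sig : T -> T) (f : T -> algC) (S : {set T}) :
  (forall a, a \in S -> sig a \in S) -> (forall a, a \in S -> sig (sig a) = a) ->
  (forall a, a \in S -> f (sig a) = (f a)^*) -> (forall a, a \in S -> f a != 0) ->
  (forall a, a \in S -> sig a = a -> 0 < f a) -> 0 < \prod_(a in S) f a.
Proof.
move=> h1 h2 h3 h4 h5.
have [k] := ubnP #|S|; elim: k S h1 h2 h3 h4 h5 => // k IH S h1 h2 h3 h4 h5 ltS.
have [->|[a aS]] := set_0Vmem S; first by rewrite big_set0 ltr01.
rewrite (big_setD1 a aS) /=.
have [fix_a|nfix] := eqVneq (sig a) a.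
  apply: mulr_gt0; first exact: h5.
  apply: IH => [b|b|b|b|b|].
  - rewrite !inE => /andP[nba bS]; rewrite h1 // andbT.
    by apply: contra nba => /eqP e; rewrite -(h2 b bS) e fix_a.
  - by rewrite inE => /andP[_ /h2].
  - by rewrite inE => /andP[_ /h3].
  - by rewrite inE => /andP[_ /h4].
  - by rewrite inE => /andP[_ /h5].
  by rewrite (cardsD1 a S) aS add1n in ltS.
have saS : sig a \in S :\ a by rewrite !inE nfix h1.
rewrite (big_setD1 _ saS) /= mulrA h3 // mulr_gt0 ?mul_conjC_gt0 ?h4 //.
apply: IH => [b|b|b|b|b|].
- rewrite !inE => /and3P[nbsa nba bS]; rewrite h1 // andbT.
  apply/andP; split.
    by apply: contra nba => /eqP e; rewrite -(h2 b bS) e h2.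
  by apply: contra nbsa => /eqP e; rewrite -(h2 b bS) e.
- by rewrite !inE => /and3P[_ _ /h2].
- by rewrite !inE => /and3P[_ _ /h3].
- by rewrite !inE => /and3P[_ _ /h4].
- by rewrite !inE => /and3P[_ _ /h5].
rewrite (cardsD1 a S) aS add1n in ltS.
rewrite (cardsD1 (sig a)) saS add1n in ltS; exact: ltnW ltS.
Qed.


Unset Implicit Arguments.
Set Strict Implicit.

Theorem theorem1 (gT : finGroupType) (G : {group gT}) (n : nat)
    (rG : mx_representation algC G n) (Hfaithful : mx_faithful rG)
    (M : 'M[int]_(Nirr G))
    (HM : forall i : Iirr G,
        cfRepr rG * 'chi_i = \sum_(j < Nirr G) (M i j)%:~R *: 'chi_j)
    (c : {set gT} -> gT)
    (Hc : forall xG, xG \in classes G -> c xG \in xG) :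
  exists k : nat,
    [/\ (0 < k)%N,
        coker_order (mckay_cartan n M)^T k &
        (#|G|%:R)^-1 *
          \prod_(xG in classes G | xG != ((1 : gT) ^: G)%g) (n%:R - cfRepr rG (c xG))
        = k%:R :> algC].
Proof.
have [Hdet Hdet0] := char_det HM.
set phi := cfRepr rG in Hdet *.
have phiC : phi \is a character := cfRepr_char rG.
have clinv (A : {set gT}) y : A \in classes G -> y \in A -> phi y = phi (repr A).
  move=> AG; case/repr_classesP: AG => Gr eA; rewrite {1}eA => /imsetP[a Ga ->].
  exact: cfunJ.
have cG A : A \in classes G -> c A \in G.
  move=> AG; have := Hc A AG; case/imsetP: AG => z Gz -> /imsetP[a Ga ->].
  exact: groupJ.
have Aclass A : A \in classes G -> A = (c A ^: G)%g.
  by move=> AG; have := Hc A AG; case/imsetP: AG => z Gz -> /class_eqP ->.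
pose S := [set A in classes G | A != (1 ^: G)%g].
pose f A := n%:R - phi (c A).
set P := \prod_(xG in classes G | _) _.
have PS : P = \prod_(A in S) f A by apply: eq_bigl => A; rewrite inE.
have Pcl : P = \prod_(i < Nirr G | irr_class i != (1 ^: G)%g)
                  (n%:R - phi (repr (irr_class i))).
  rewrite /P big_mkcondr reindex_irr_class [RHS]big_mkcond /=.
  apply: eq_bigr => i _; case: ifP => // _.
  by rewrite (clinv _ _ (irr_classP i) (Hc _ (irr_classP i))).
pose sig A := (((c A)^-1) ^: G)%g.
have SG A : A \in S -> A \in classes G by rewrite inE => /andP[].
have nt A : A \in S -> c A != 1%g.
  rewrite inE => /andP[AG]; apply: contra => /eqP c1.
  by rewrite {1}(Aclass A AG) c1.
have sigG A : A \in S -> sig A \in classes G.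
  by move=> AS; apply: mem_classes; rewrite groupV cG ?SG.
have csig A : A \in S -> exists2 a, a \in G & c (sig A) = ((c A)^-1 ^ a)%g.
  by move=> AS; have := Hc _ (sigG A AS); case/imsetP => a Ga e; exists a.
have fsig A : A \in S -> f (sig A) = (f A)^*.
  move=> AS; rewrite /f; have [a Ga e] := csig A AS; rewrite e.
  rewrite cfunJ ?groupV ?cG ?SG // char_inv // rmorphB /= conjC_nat //.
have Ppos : 0 < P.
  rewrite PS; apply: (@prod_conj_pos _ sig) => A AS.
  - rewrite inE sigG //=; apply/negP => /eqP e.
    have : ((c A)^-1)%g \in (1 ^: G)%g by rewrite -e class_refl.
    by rewrite class1G inE invg_eq1 (negbTE (nt A AS)).
  - change (((c (sig A))^-1 ^: G)%g = A); have [a Ga ->] := csig A AS.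
    by rewrite -conjVg invgK classGidl // -Aclass // SG.
  - exact: fsig.
  - rewrite /f subr_eq0; apply/eqP => e.
    have := max_cfRepr_mx1 (cG A (SG A AS)) (etrans (esym e) (esym (cfRepr1 rG))).
    rewrite -(repr_mx1 rG) => /(mx_faithful_inj Hfaithful (cG A (SG A AS)) (group1 G)).
    by move/eqP; rewrite (negbTE (nt A AS)).
  - move=> sA; have := fsig A AS; rewrite sA => /esym/CrealP fR.
    have phiR : phi (c A) \is Num.real.
      by rewrite -[phi _](subKr (n%:R : algC)) rpredB // ?realn.
    have nz : f A != 0.
      rewrite /f subr_eq0; apply/eqP => e.
      have := max_cfRepr_mx1 (cG A (SG A AS)) (etrans (esym e) (esym (cfRepr1 rG))).
      rewrite -(repr_mx1 rG) => /(mx_faithful_inj Hfaithful (cG A (SG A AS)) (group1 G)).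
      by move/eqP; rewrite (negbTE (nt A AS)).
    rewrite lt_def nz /= /f subr_ge0 (le_trans (real_ler_norm phiR)) //.
    by have := char1_ge_norm (c A) phiC; rewrite cfRepr1.
have hm : (0 < Nirr G)%N by [].
have Emap : map_mx intr (mckay_cartan n M) =
            delete0 (map_mx intr (ext_mckay_cartan n M) : 'M[algC]_(Nirr G)).
  by apply/matrixP => i j; rewrite !mxE.
have detC : (\det (mckay_cartan n M))%:~R = #|G|%:R^-1 * P :> algC.
  rewrite -det_map_mx Emap (det_delete0 _ hm).
  have -> : Ordinal hm = 0 by apply: val_inj.
  by rewrite Hdet Hdet0 subr0 Pcl.
have detpos : 0 < \det (mckay_cartan n M).
  by rewrite -(ltr0z algC) detC mulr_gt0 // invr_gt0 ltr0n cardG_gt0.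
exists (absz (\det (mckay_cartan n M)^T)).
split.
- by rewrite det_tr absz_gt0 gt_eqF.
- by apply: coker_det; rewrite det_tr gt_eqF.
by rewrite det_tr -detC -{1}(gez0_abs (ltW detpos)).
Qed.
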